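(* Let $\mathscr{H}$ be a complex Hilbert space and $A\in\mathbb{B}(\mathscr{H})$. Then $$w^2(A)\leq\frac{1}{4}\, w^2\left(|A|+i|A^*|\right)+\frac{1}{8}\left\||A|^2+|A^*|^2\right\|+\frac{1}{4}\,w\left(|A||A^*|\right).$$
   Context: $\mathbb{B}(\mathscr{H})$ denotes the algebra of bounded linear operators on $\mathscr{H}$; $\|\cdot\|$ is the operator norm. For $T\in\mathbb{B}(\mathscr{H})$, $|T|=(T^*T)^{1/2}$ is the positive square root of $T^*T$, and $w(T)=\sup\{|\langle Tx,x\rangle|: x\in\mathscr{H},\ \|x\|=1\}$ is the numerical radius. *)

(* Defs.v *)
From HB Require Import structures.
From mathcomp Require Import all_boot all_order all_algebra.
From mathcomp Require Import all_classical all_reals.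
From mathcomp.real_closed Require Import complex.
Set Implicit Arguments. Unset Strict Implicit. Unset Printing Implicit Defensive.
Import Order.TTheory GRing.Theory Num.Theory.
Local Open Scope ring_scope.
Local Open Scope complex_scope.

Section Hilbert.
Variable R : realType.
Variable V : lmodType R[i].
Variable ip : V -> V -> R[i].

Definition is_inner_product : Prop :=
  [/\ (forall (a : R[i]) (x y z : V), ip (a *: x + y) z = a * ip x z + ip y z),
      (forall x y : V, ip y x = conjc (ip x y)),
      (forall x : V, 0 <= ip x x) &
      (forall x : V, ip x x = 0 -> x = 0)].

Definition hnorm (x : V) : R := Num.sqrt (complex.Re (ip x x)).

Definition is_complete : Prop :=
  forall u : nat -> V,
    (forall e : R, 0 < e -> exists N : nat, forall m n : nat,
        (N <= m)%N -> (N <= n)%N -> hnorm (u m - u n) < e) ->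
    exists l : V, forall e : R, 0 < e -> exists N : nat, forall n : nat,
        (N <= n)%N -> hnorm (u n - l) < e.

Definition is_hilbert : Prop := is_inner_product /\ is_complete.

Definition is_bounded_op (T : V -> V) : Prop :=
  (forall (a : R[i]) (x y : V), T (a *: x + y) = a *: T x + T y) /\
  exists M : R, forall x : V, hnorm (T x) <= M * hnorm x.

Definition is_adjoint (T S : V -> V) : Prop :=
  forall x y : V, ip (T x) y = ip x (S y).

Definition is_positive_op (P : V -> V) : Prop :=
  is_bounded_op P /\ forall x : V, 0 <= ip (P x) x.

(* P is the positive square root of S (unique in a Hilbert space) *)
Definition is_pos_sqrt (P S : V -> V) : Prop :=
  is_positive_op P /\ forall x : V, P (P x) = S x.

Definition opnorm (T : V -> V) : R :=
  sup [set r : R | exists x : V, hnorm x <= 1 /\ r = hnorm (T x)].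

Definition numrad (T : V -> V) : R :=
  sup [set r : R | exists x : V, hnorm x = 1 /\ r = Normc.normc (ip (T x) x)].

End Hilbert.

(* Main.v *)
Require Import Defs.
From HB Require Import structures.
From mathcomp Require Import all_boot all_order all_algebra.
From mathcomp Require Import all_classical all_reals.
From mathcomp.real_closed Require Import complex.
From mathcomp Require Import ring lra.
Import Order.TTheory GRing.Theory Num.Theory.
Local Open Scope ring_scope.
Local Open Scope complex_scope.
Set Implicit Arguments. Unset Strict Implicit. Unset Printing Implicit Defensive.

Notation cRe := complex.Re.
Notation cIm := complex.Im.
Section Herm.
Variable R : realType.
Variable V : lmodType R[i].

Definition sq (z : R[i]) : R := cRe z ^+ 2 + cIm z ^+ 2.

Lemma sq_ge0 z : 0 <= sq z.
Proof. by rewrite /sq addr_ge0 // sqr_ge0. Qed.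

Lemma ge0_real (z : R[i]) : 0 <= z -> z = (cRe z)%:C /\ 0 <= cRe z.
Proof.
case: z => a b; rewrite lecE /= => /andP[/eqP b0 ha]; split => //.
by rewrite b0.
Qed.

Lemma quad_lemma (a b n : R) : 0 <= a -> 0 <= b -> 0 <= n ->
  (forall s, 0 <= a - 2 * s * n + s ^+ 2 * n * b) -> n <= a * b.
Proof.
move=> ha hb hn H.
have [b0|bpos] := eqVneq b 0.
  subst b.
  have [n0|npos] := eqVneq n 0; first by rewrite n0 mulr0.
  have np : 0 < n by rewrite lt_def npos hn.
  have := H ((a + 1) / (2 * n)).
  have -> : 2 * ((a + 1) / (2 * n)) * n = a + 1 by field; rewrite npos.
  rewrite mulr0 addr0; lra.
have bp : 0 < b by rewrite lt_def bpos hb.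
have := H (b^-1).
have -> : a - 2 * b^-1 * n + b^-1 ^+ 2 * n * b = a - b^-1 * n.
  by field; rewrite bpos.
rewrite subr_ge0 => h.
have := ler_wpM2r hb h.
by rewrite mulrAC mulVf // mul1r.
Qed.

Definition herm (f : V -> V -> R[i]) : Prop :=
  [/\ (forall (a : R[i]) (x y z : V), f (a *: x + y) z = a * f x z + f y z),
      (forall x y : V, f y x = (f x y)^*) &
      (forall x : V, 0 <= f x x)].

Variable f : V -> V -> R[i].
Hypothesis hf : herm f.

Lemma f0l z : f 0 z = 0.
Proof.
case: hf => L _ _.
have := L 1 0 0 z; rewrite scale1r addr0 mul1r => h.
by apply: (addrI (f 0 z)); rewrite addr0 -h.
Qed.

Lemma fDl x y z : f (x + y) z = f x z + f y z.
Proof. by case: hf => L _ _; rewrite -{1}[x]scale1r L mul1r. Qed.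

Lemma fZl a x z : f (a *: x) z = a * f x z.
Proof. by case: hf => L _ _; rewrite -[a *: x]addr0 L f0l addr0. Qed.

Lemma fNl x z : f (- x) z = - f x z.
Proof. by rewrite -scaleN1r fZl mulN1r. Qed.

Lemma fBl x y z : f (x - y) z = f x z - f y z.
Proof. by rewrite fDl fNl. Qed.

Lemma fC x y : f y x = (f x y)^*.
Proof. by case: hf. Qed.

Lemma fDr x y z : f z (x + y) = f z x + f z y.
Proof. by rewrite fC fDl rmorphD (fC x z) (fC y z). Qed.

Lemma fZr a x z : f z (a *: x) = a^* * f z x.
Proof. by rewrite fC fZl rmorphM (fC x z). Qed.

Lemma f0r z : f z 0 = 0.
Proof. by rewrite fC f0l conjc0. Qed.

Lemma fNr x z : f z (- x) = - f z x.
Proof. by rewrite fC fNl rmorphN (fC x z). Qed.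

Lemma fBr x y z : f z (x - y) = f z x - f z y.
Proof. by rewrite fDr fNr. Qed.

Lemma fxx x : f x x = (cRe (f x x))%:C.
Proof. by case: hf => _ _ P; case: (ge0_real (P x)). Qed.

Lemma fxx_ge0 x : 0 <= cRe (f x x).
Proof. by case: hf => _ _ P; case: (ge0_real (P x)). Qed.

Lemma f_expand x y c :
  f (x + c *: y) (x + c *: y) = f x x + c^* * f x y + c * f y x + c * c^* * f y y.
Proof.
rewrite !fDl !fDr !fZl !fZr; ring.
Qed.

Lemma CS x y : sq (f x y) <= cRe (f x x) * cRe (f y y).
Proof.
apply: quad_lemma; [exact: fxx_ge0|exact: fxx_ge0|exact: sq_ge0|].
move=> s.
have := fxx_ge0 (x + (- (s%:C * f x y)) *: y).
rewrite f_expand (fC x y) (fxx x) (fxx y).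
case: (f x y) => p q.
rewrite /sq /=.
move: (cRe (f x x)) (cRe (f y y)) => a b.
simpc. rewrite /=.
move=> h; lra.
Qed.

End Herm.

Section RealLemmas.
Variable R : realType.

Lemma bernoulli (r : R) n : 0 <= r -> 1 + n%:R * r <= (1 + r) ^+ n.
Proof.
move=> hr; elim: n => [|n IH]; first by rewrite expr0 mul0r addr0.
rewrite exprS.
have h1 : 0 <= 1 + r by rewrite addr_ge0.
have := ler_wpM2l h1 IH.
have h2 : 0 <= n%:R * r * r by rewrite mulr_ge0 ?mulr_ge0 ?ler0n.
rewrite -natr1.
move=> h; apply: le_trans h.
have -> : (1 + r) * (1 + n%:R * r) = 1 + (n%:R + 1) * r + n%:R * r * r by ring.
lra.
Qed.

Lemma geo_small (q d : R) : 0 <= q -> q < 1 -> 0 < d ->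
  exists N, forall n, (N <= n)%N -> q ^+ n < d.
Proof.
move=> q0 q1 d0.
have key : exists N, q ^+ N < d.
  have [->|qn0] := eqVneq q 0; first by exists 1%N; rewrite expr1.
  have qp : 0 < q by rewrite lt_def qn0 q0.
  set r := q^-1 - 1.
  have rp : 0 < r by rewrite /r subr_gt0 invf_gt1.
  have hb : 0 <= (d * r)^-1 by rewrite invr_ge0 mulr_ge0 // ltW.
  set N := Num.Def.archi_bound ((d * r)^-1).
  exists N.
  have hN := archi_boundP hb.
  have h1 : d^-1 < N%:R * r.
    have := ltr_pM2r rp; move=> /(_ ((d * r)^-1) N%:R); rewrite hN => /esym h.
    by move: h; rewrite invfM -mulrA mulVf ?gt_eqF // mulr1.
  have := bernoulli N (ltW rp).
  have e : 1 + r = q^-1 by rewrite /r addrC subrK.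
  rewrite e exprVn => hB.
  have hpos : 0 < q ^+ N by rewrite exprn_gt0.
  have h3 : d^-1 < (q ^+ N)^-1 by apply: (lt_le_trans h1); apply: le_trans hB; lra.
  by move: h3; rewrite ltf_pV2 ?posrE.
case: key => N hN; exists N => n hn.
apply: le_lt_trans hN.
by rewrite -(subnKC hn) exprD ler_piMr ?exprn_ge0 // exprn_ile1 // ltW.
Qed.

Lemma zero_of_small (a : R) : 0 <= a -> (forall d, 0 < d -> a <= d) -> a = 0.
Proof.
move=> ha H; apply/eqP; rewrite eq_le ha andbT; apply/negP => /negP.
rewrite -ltNge => ap.
have := H (a / 2); rewrite divr_gt0 // => /(_ isT); lra.
Qed.

End RealLemmas.

Section Real2.
Variable R : realType.

Lemma sq_le_div (a b : R) : 0 <= a -> 0 <= b -> a ^+ 2 <= b * a -> a <= b.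
Proof.
move=> ha hb h.
have [->|nz] := eqVneq a 0; first by [].
have ap : 0 < a by rewrite lt_def nz ha.
by rewrite -(ler_pM2r ap) -expr2.
Qed.

Lemma pow_trick (g a B : R) (N : nat -> nat) : 0 <= g -> 0 < a ->
  (forall m, (m <= N m)%N) -> (forall m, g ^+ N m * a <= B * a ^+ N m) -> g <= a.
Proof.
move=> hg ha hN H; rewrite leNgt; apply/negP => ag.
have [r [gr r1]] : exists r, g = r * a /\ 1 < r.
  exists (g / a); split; first by rewrite divfK ?gt_eqF.
  by rewrite ltr_pdivlMr // mul1r.
set t := r - 1.
have tp : 0 < t by rewrite /t subr_gt0.
have hb0 : 0 <= B / (a * t) .
  have := H 0%N; rewrite -/(N 0%N) => h0.
  have : 0 <= B * a ^+ N 0%N by apply: le_trans h0; rewrite mulr_ge0 ?exprn_ge0 // ltW.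
  rewrite pmulr_lge0 ?exprn_gt0 // => B0.
  by rewrite divr_ge0 // mulr_ge0 // ltW.
set m := Num.Def.archi_bound (B / (a * t)).
have hm := archi_boundP hb0.
have hNm := hN m.
have h := H m.
have {h} h : r ^+ N m * a <= B.
  rewrite -(ler_pM2r (exprn_gt0 (N m) ha)).
  have e : r ^+ N m * a * a ^+ N m = g ^+ N m * a by rewrite gr exprMn; ring.
  by rewrite e.
have hber := bernoulli (N m) (ltW tp).
have et : 1 + t = r by rewrite /t addrC subrK.
rewrite et in hber.
have h2 : (1 + (N m)%:R * t) * a <= B by apply: le_trans h; rewrite ler_pM2r.
have h3 : B / (a * t) < (N m)%:R.
  apply: (lt_le_trans hm); by rewrite ler_nat.
move: h3; rewrite ltr_pdivrMr ?mulr_gt0 // => h3.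
have : (N m)%:R * (a * t) < (1 + (N m)%:R * t) * a.
  rewrite mulrDl mul1r mulrCA mulrA [a * _]mulrC -mulrA; lra.
lra.
Qed.

Lemma eps_lim (s a b n1 n2 : R) : 0 <= a -> 0 <= b -> 0 <= n1 -> 0 <= n2 ->
  (forall e, 0 < e -> s <= (a + e * n1) * (b + e * n2)) -> s <= a * b.
Proof.
move=> ha hb h1 h2 H; rewrite leNgt; apply/negP => hs.
set K := a * n2 + b * n1 + n1 * n2 + 1.
have K1 : 1 <= K.
  by rewrite /K lerDr !addr_ge0 ?mulr_ge0.
have Kp : 0 < K by lra.
set d := (s - a * b) / (2 * K).
have dp : 0 < d by rewrite /d divr_gt0 ?subr_gt0 // mulr_gt0.
set e := Num.min 1 d.
have ep : 0 < e by rewrite /e lt_min ltr01 dp.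
have e1 : e <= 1 by rewrite /e ge_min lexx.
have ed : e <= d by rewrite /e ge_min lexx orbT.
have := H e ep.
have -> : (a + e * n1) * (b + e * n2) = a * b + e * (a * n2 + b * n1) + e * e * (n1 * n2) by ring.
have ee : e * e * (n1 * n2) <= e * (n1 * n2).
  by rewrite -mulrA ler_piMl ?mulr_ge0 // ltW.
have eK : e * K <= d * K by rewrite ler_pM2r.
have dK : d * K = (s - a * b) / 2 by rewrite /d; field; rewrite gt_eqF.
have : e * (a * n2 + b * n1) + e * (n1 * n2) <= e * K.
  rewrite /K -mulrDr ler_pM2l // -addrA lerDl; lra.
lra.
Qed.

End Real2.

Section Reid.
Variable R : realType.
Variable V : lmodType R[i].
Variable f : V -> V -> R[i].
Hypothesis hf : herm f.
Variable S : V -> V.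
Hypothesis sym : forall x y, f (S x) y = f x (S y).

Lemma Re_le_sq0 (z : R[i]) : cRe z ^+ 2 <= sq z.
Proof. by rewrite /sq lerDl sqr_ge0. Qed.

Lemma iter_sym k x y : f (iter k S x) y = f x (iter k S y).
Proof.
elim: k x y => [//|k IH] x y.
by rewrite iterS sym IH iterSr.
Qed.

Lemma reid z B : 0 <= cRe (f (S z) z) ->
  (forall k, cRe (f (iter k S z) (iter k S z)) <= B) ->
  cRe (f (S z) z) <= cRe (f z z).
Proof.
move=> g0 hB.
set a := cRe (f z z).
have a0 : 0 <= a := fxx_ge0 hf z.
pose g m := cRe (f (iter (2 ^ m) S z) z).
have gE : forall m, cRe (f (iter (2 ^ m) S z) (iter (2 ^ m) S z)) = g m.+1.
  move=> m; rewrite /g -iter_sym -iterD expnS mul2n -addnn //.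
have step : forall m, g m ^+ 2 <= g m.+1 * a.
  move=> m; rewrite -gE; apply: le_trans (Re_le_sq0 _) _. exact: (CS hf (iter (2 ^ m) S z) z).
have stepB : forall m, g m ^+ 2 <= B * a.
  move=> m; apply: le_trans (step m) _; apply: ler_wpM2r => //.
  rewrite -gE; exact: hB.
have g0E : g 0%N = cRe (f (S z) z) by [].
rewrite -g0E in g0 *.
have [az|anz] := eqVneq a 0.
  have := step 0%N; rewrite az mulr0 => h.
  have : g 0%N ^+ 2 = 0 by apply/eqP; rewrite eq_le h sqr_ge0.
  by move/eqP; rewrite sqrf_eq0 => /eqP ->.
have ap : 0 < a by rewrite lt_def anz a0.
have claim : forall m, g 0%N ^+ (2 ^ m) * a <= g m * a ^+ (2 ^ m).
  elim=> [|m IH]; first by rewrite expn0 !expr1 mulrC.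
  have l0 : 0 <= g 0%N ^+ (2 ^ m) * a by rewrite mulr_ge0 ?exprn_ge0 // ltW.
  have := ler_pM l0 l0 IH IH.
  rewrite -!expr2 !exprMn => h.
  have h2 : g m ^+ 2 * (a ^+ (2 ^ m)) ^+ 2 <= g m.+1 * a * (a ^+ (2 ^ m)) ^+ 2.
    by apply: ler_wpM2r; [rewrite sqr_ge0 | exact: step].
  have := le_trans h h2.
  rewrite -!exprM -expnSr expr2 mulrA [g m.+1 * a * _]mulrAC.
  by rewrite ler_pM2r.
apply: (@pow_trick _ _ _ B (fun m => 2 ^ m.+1)%N) => //.
  move=> m; apply: leq_trans (ltnW (ltn_expl m.+1 (isT : (1 < 2)%N))); exact: leqnSn.
move=> m.
have l0 : 0 <= g 0%N ^+ (2 ^ m) * a by rewrite mulr_ge0 ?exprn_ge0 // ltW.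
have := ler_pM l0 l0 (claim m) (claim m).
rewrite -!expr2 !exprMn => h.
have h2 : g m ^+ 2 * (a ^+ (2 ^ m)) ^+ 2 <= B * a * (a ^+ (2 ^ m)) ^+ 2.
  by apply: ler_wpM2r; [rewrite sqr_ge0 | exact: stepB].
have := le_trans h h2.
rewrite -!exprM -expnSr expr2 mulrA [B * a * _]mulrAC.
by rewrite -mulrA [a * _]mulrC mulrA ler_pM2r.
Qed.

End Reid.

Section Hil.
Variable R : realType.
Variable V : lmodType R[i].
Variable ip : V -> V -> R[i].
Hypothesis hip : is_inner_product ip.
Hypothesis hcomp : is_complete ip.

Lemma ip_herm : herm ip.
Proof. by case: hip => L C P D; split. Qed.

Definition nn x := cRe (ip x x).

Lemma nnE x : ip x x = (nn x)%:C.
Proof. exact: fxx ip_herm x. Qed.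

Lemma nn_ge0 x : 0 <= nn x.
Proof. exact: fxx_ge0 ip_herm x. Qed.

Lemma hn_sqr x : hnorm ip x ^+ 2 = nn x.
Proof. by rewrite /hnorm sqr_sqrtr // nn_ge0. Qed.

Lemma hn_ge0 x : 0 <= hnorm ip x.
Proof. exact: sqrtr_ge0. Qed.

Lemma nn_eq0 x : nn x = 0 -> x = 0.
Proof. by case: hip => _ _ _ D h; apply: D; rewrite nnE h. Qed.

Lemma hn_eq0 x : hnorm ip x = 0 -> x = 0.
Proof.
move=> h; apply: nn_eq0; rewrite -hn_sqr h; exact: expr0n.
Qed.

Lemma nnD x y : nn (x + y) = nn x + nn y + 2 * cRe (ip x y).
Proof.
rewrite {1}/nn !(fDl ip_herm) !(fDr ip_herm) (fC ip_herm x y) (nnE x) (nnE y).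
move: (nn x) (nn y) (ip x y) => a b [p q].
simpc; rewrite /=. ring.
Qed.

Lemma nnZ a x : nn (a *: x) = sq a * nn x.
Proof.
rewrite {1}/nn (fZl ip_herm) (fZr ip_herm) (nnE x).
move: (nn x) a => b [p q].
rewrite /sq; simpc; rewrite /=. ring.
Qed.

Lemma nnN x : nn (- x) = nn x.
Proof. by rewrite -scaleN1r nnZ /sq /= oppr0 expr0n /= addr0 sqrrN expr1n mul1r. Qed.

Lemma CSip x y : sq (ip x y) <= nn x * nn y.
Proof. exact: CS ip_herm x y. Qed.

Lemma Re_le_sq (z : R[i]) : cRe z ^+ 2 <= sq z.
Proof. by rewrite /sq lerDl sqr_ge0. Qed.

Lemma le_sqrt_sq (z : R[i]) : cRe z <= Num.sqrt (sq z).
Proof.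
apply: (le_trans (ler_norm _)).
by rewrite -sqrtr_sqr ler_sqrt ?sq_ge0 // Re_le_sq.
Qed.

Lemma Re_ip_le x y : cRe (ip x y) <= hnorm ip x * hnorm ip y.
Proof.
apply: (le_trans (le_sqrt_sq _)).
by rewrite /hnorm -sqrtrM ?nn_ge0 // ler_sqrt ?mulr_ge0 ?nn_ge0 // CSip.
Qed.

Lemma hnD x y : hnorm ip (x + y) <= hnorm ip x + hnorm ip y.
Proof.
have h : nn (x + y) <= (hnorm ip x + hnorm ip y) ^+ 2.
  rewrite nnD sqrrD !hn_sqr.
  have := Re_ip_le x y; lra.
rewrite {1}/hnorm -(ger0_norm (addr_ge0 (hn_ge0 x) (hn_ge0 y))) -sqrtr_sqr.
by rewrite ler_sqrt // sqr_ge0.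
Qed.

Lemma hnN x : hnorm ip (- x) = hnorm ip x.
Proof. by rewrite /hnorm -/(nn _) nnN. Qed.

Lemma hnB x y : hnorm ip (x - y) = hnorm ip (y - x).
Proof. by rewrite -hnN opprB. Qed.



Definition islin (T : V -> V) := forall a x y, T (a *: x + y) = a *: T x + T y.

Section Lin.
Variable T : V -> V.
Hypothesis hT : islin T.
Lemma T0 : T 0 = 0.
Proof.
have := hT 1 0 0; rewrite !scale1r addr0 => h0; move: h0.
by move=> h; apply: (addrI (T 0)); rewrite addr0 -h.
Qed.
Lemma TD x y : T (x + y) = T x + T y.
Proof. by rewrite -{1}[x]scale1r hT scale1r. Qed.
Lemma TZ a x : T (a *: x) = a *: T x.
Proof. by rewrite -[a *: x]addr0 hT T0 addr0. Qed.
Lemma TN x : T (- x) = - T x.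
Proof. by rewrite -scaleN1r TZ scaleN1r. Qed.
Lemma TB x y : T (x - y) = T x - T y.
Proof. by rewrite TD TN. Qed.
End Lin.

Definition posop T := islin T /\ (forall x, 0 <= ip (T x) x).

Lemma pos_sa T (hT : posop T) x y : ip (T x) y = ip x (T y).
Proof.
case: hT => hl hp.
have real z : ip (T z) z = (cRe (ip (T z) z))%:C by case: (ge0_real (hp z)).
have E c : ip (T (x + c *: y)) (x + c *: y) = ip (T x) x + c^* * ip (T x) y
    + c * ip (T y) x + c * c^* * ip (T y) y.
  rewrite (TD hl) (TZ hl) !(fDl ip_herm) !(fDr ip_herm) !(fZl ip_herm) !(fZr ip_herm).
  ring.
have i1 : cIm (ip (T x) x + (1 +i* 0)^* * ip (T x) y
    + (1 +i* 0) * ip (T y) x + (1 +i* 0) * (1 +i* 0)^* * ip (T y) y) = 0.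
  by rewrite -E; exact: ger0_Im (hp _).
have i2 : cIm (ip (T x) x + (0 +i* 1)^* * ip (T x) y
    + (0 +i* 1) * ip (T y) x + (0 +i* 1) * (0 +i* 1)^* * ip (T y) y) = 0.
  by rewrite -E; exact: ger0_Im (hp _).
rewrite (real x) (real y) in i1 i2.
rewrite (fC ip_herm (T y) x).
move: i1 i2; move: (ip (T x) y) (ip (T y) x) (cRe (ip (T x) x)) (cRe (ip (T y) y)).
move=> [p q] [p' q'] a b; simpc; rewrite /= => i1 i2.
apply/eqP; rewrite eq_complex /=; apply/andP; split; apply/eqP; lra.
Qed.

Lemma pos_herm T (hT : posop T) : herm (fun x y => ip (T x) y).
Proof.
case: (hT) => hl hp; split => //.
- by move=> a x y z; rewrite hl (fDl ip_herm) (fZl ip_herm).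
- by move=> x y; rewrite (pos_sa hT) (fC ip_herm).
Qed.

Lemma ReD (a b : R[i]) : cRe (a + b) = cRe a + cRe b.
Proof. by case: a; case: b. Qed.
Lemma ReN (a : R[i]) : cRe (- a) = - cRe a.
Proof. by case: a. Qed.
Lemma ReB (a b : R[i]) : cRe (a - b) = cRe a - cRe b.
Proof. by rewrite ReD ReN. Qed.
Lemma ReRM (r : R) (a : R[i]) : cRe (r%:C * a) = r * cRe a.
Proof. by case: a => p q; simpc; rewrite /=. Qed.
Lemma ReJRM (r : R) (a : R[i]) : cRe ((r%:C)^* * a) = r * cRe a.
Proof. by case: a => p q; simpc; rewrite /=. Qed.
Lemma ReJ (a : R[i]) : cRe a^* = cRe a.
Proof. by case: a. Qed.
Lemma Re_real (r : R) : cRe r%:C = r.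
Proof. by []. Qed.
Lemma sqJ (a : R[i]) : sq a^* = sq a.
Proof. by case: a => p q; rewrite /sq /= sqrrN. Qed.

Lemma sq_real (c : R) : sq c%:C = c ^+ 2.
Proof. by rewrite /sq /= expr0n /= addr0. Qed.

Definition bnd (T : V -> V) (M : R) := 0 <= M /\ forall x, nn (T x) <= M ^+ 2 * nn x.

Lemma hn_le (u w : V) k : 0 <= k -> nn u <= k ^+ 2 * nn w -> hnorm ip u <= k * hnorm ip w.
Proof.
move=> hk h; rewrite /hnorm -(ger0_norm hk) -sqrtr_sqr -sqrtrM ?sqr_ge0 //.
by rewrite ler_sqrt // mulr_ge0 ?sqr_ge0 ?nn_ge0.
Qed.

Lemma nn_le (u w : V) k : 0 <= k -> hnorm ip u <= k * hnorm ip w -> nn u <= k ^+ 2 * nn w.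
Proof.
move=> hk h; rewrite -!hn_sqr -exprMn ler_sqr // ?nnegrE ?mulr_ge0 ?hn_ge0 //.
Qed.

Lemma bounded_bnd T : is_bounded_op ip T -> islin T /\ exists M, bnd T M.
Proof.
case=> hl [M' hM']; split => //; exists (Num.max M' 0); split.
  by rewrite le_max lexx orbT.
move=> x; apply: nn_le; first by rewrite le_max lexx orbT.
apply: (le_trans (hM' x)); apply: ler_wpM2r; first exact: hn_ge0.
by rewrite le_max lexx.
Qed.

Lemma bnd_hn T M : bnd T M -> forall x, hnorm ip (T x) <= M * hnorm ip x.
Proof. by case=> hM h x; apply: hn_le. Qed.

Lemma hnZr (r : R) x : hnorm ip (r%:C *: x) = `|r| * hnorm ip x.
Proof.
by rewrite /hnorm -/(nn _) nnZ sq_real sqrtrM ?sqr_ge0 // sqrtr_sqr.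
Qed.

Section Inv.
Variables (P : V -> V) (M eps : R).
Hypotheses (hP : posop P) (hM : bnd P M) (he : 0 < eps).

Definition Pe x := P x + eps%:C *: x.

Lemma Pe_lin : islin Pe.
Proof.
move=> a x y; rewrite /Pe (proj1 hP) !scalerDr !scalerA [eps%:C * a]mulrC.
by rewrite addrACA.
Qed.

Lemma Pe_pos : posop Pe.
Proof.
split; first exact: Pe_lin.
move=> x; rewrite /Pe (fDl ip_herm) (fZl ip_herm).
apply: addr_ge0; first exact: (proj2 hP).
by apply: mulr_ge0; [rewrite ler0c ltW | case: hip].
Qed.

Lemma Re_Pxx_le u : cRe (ip (P u) u) <= M * nn u.
Proof.
apply: (le_trans (Re_ip_le _ _)).
rewrite -hn_sqr expr2 mulrA; apply: ler_wpM2r; first exact: hn_ge0.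
exact: bnd_hn hM u.
Qed.

Lemma Re_Pxx_ge0 u : 0 <= cRe (ip (P u) u).
Proof. by have := proj2 hP u; rewrite lecE /= => /andP[]. Qed.

Lemma nnP_le x : nn (P x) <= M * cRe (ip (P x) x).
Proof.
have hc := CS (pos_herm hP) x (P x).
rewrite /= nnE sq_real in hc.
have h2 : nn (P x) ^+ 2 <= cRe (ip (P x) x) * (M * nn (P x)).
  apply: (le_trans hc); apply: ler_wpM2l; first exact: Re_Pxx_ge0.
  exact: Re_Pxx_le.
have [z|nz] := eqVneq (nn (P x)) 0.
  by rewrite z mulr_ge0 ?Re_Pxx_ge0 //; case: hM.
have pz : 0 < nn (P x) by rewrite lt_def nz nn_ge0.
rewrite -(ler_pM2r pz); move: h2; rewrite expr2 => h2.
by apply: (le_trans h2); rewrite mulrCA mulrA [M * _]mulrC.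
Qed.

Let c := M + eps.
Let q := M / c.

Lemma M_ge0 : 0 <= M. Proof. by case: hM. Qed.
Lemma c_pos : 0 < c. Proof. by rewrite /c; have := M_ge0; have := he; lra. Qed.
Lemma q_ge0 : 0 <= q. Proof. by rewrite /q divr_ge0 ?M_ge0 // ltW ?c_pos. Qed.
Lemma q_lt1 : q < 1.
Proof. by rewrite /q ltr_pdivrMr ?c_pos // mul1r /c; have := he; lra. Qed.

Lemma hn0 : hnorm ip 0 = 0.
Proof. by rewrite /hnorm (f0l ip_herm) /= sqrtr0. Qed.

Lemma N_contr e : nn (e - (c^-1)%:C *: Pe e) <= q ^+ 2 * nn e.
Proof.
have cn0 : c != 0 by rewrite gt_eqF ?c_pos.
have id : e - (c^-1)%:C *: Pe e = (c^-1)%:C *: ((M%:C) *: e - P e).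
  rewrite /Pe scalerDr scalerBr !scalerA -!rmorphM /=.
  have -> : c^-1 * M = 1 - c^-1 * eps by rewrite /c; field.
  rewrite rmorphB /= rmorph1 scalerBl scale1r.
  by rewrite opprD addrA addrAC.
rewrite id nnZ sq_real.
rewrite nnD nnZ sq_real nnN (fNr ip_herm) (fZl ip_herm) ReN ReRM (fC ip_herm (P e) e) ReJ.
have h1 := nnP_le e.
have h2 : 0 <= M * cRe (ip (P e) e) by rewrite mulr_ge0 ?M_ge0 ?Re_Pxx_ge0.
have -> : q ^+ 2 * nn e = c^-1 ^+ 2 * (M ^+ 2 * nn e) by rewrite /q; ring.
apply: ler_wpM2l; first by rewrite sqr_ge0.
lra.
Qed.

Definition step y x := x + (c^-1)%:C *: (y - Pe x).
Definition xs y n := iter n (step y) 0.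
Definition es y n := y - Pe (xs y n).

Lemma es_succ y n : es y n.+1 = es y n - (c^-1)%:C *: Pe (es y n).
Proof.
rewrite /es /xs iterS -/(xs y n) /step (TD Pe_lin) (TZ Pe_lin) -/(es y n).
by rewrite opprD addrA.
Qed.

Lemma es_bound y n : nn (es y n) <= (q ^+ n) ^+ 2 * nn y.
Proof.
elim: n => [|n IH].
  by rewrite /es /xs /= (T0 Pe_lin) subr0 expr0 expr1n mul1r.
rewrite es_succ; apply: (le_trans (N_contr _)).
rewrite (_ : (q ^+ n.+1) ^+ 2 * nn y = q ^+ 2 * ((q ^+ n) ^+ 2 * nn y)).
  by apply: ler_wpM2l => //; exact: sqr_ge0.
by rewrite mulrA -exprMn -exprS.
Qed.

Lemma es_hn y n : hnorm ip (es y n) <= q ^+ n * hnorm ip y.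
Proof. by apply: hn_le; [rewrite exprn_ge0 ?q_ge0 | exact: es_bound]. Qed.

Lemma xs_cauchy y n k : hnorm ip (xs y (n + k) - xs y n)
  <= c^-1 * hnorm ip y * (q ^+ n - q ^+ (n + k)) / (1 - q).
Proof.
have q1 : 1 - q != 0 by have := q_lt1; rewrite subr_eq0 => h; rewrite eq_sym lt_eqF.
elim: k => [|k IH].
  by rewrite addn0 subrr hn0 subrr mulr0 mul0r.
have e : xs y (n + k.+1) - xs y n = (xs y (n + k) - xs y n) + (c^-1)%:C *: es y (n + k).
  rewrite addnS /xs iterS -/(xs y (n + k)) /step -/(es y (n + k)).
  by rewrite addrAC.
rewrite e; apply: (le_trans (hnD _ _)).
rewrite hnZr ger0_norm; last by rewrite invr_ge0 ltW ?c_pos.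
have h := es_hn y (n + k).
have h' : c^-1 * hnorm ip (es y (n + k)) <= c^-1 * (q ^+ (n + k) * hnorm ip y).
  by apply: ler_wpM2l => //; rewrite invr_ge0 ltW ?c_pos.
apply: (le_trans (lerD IH h')).
rewrite le_eqVlt; apply/orP; left; apply/eqP.
rewrite addnS exprS; field.
by rewrite q1 gt_eqF ?c_pos.
Qed.

Lemma xs_cauchy2 y m n : (n <= m)%N ->
  hnorm ip (xs y m - xs y n) <= c^-1 * hnorm ip y / (1 - q) * q ^+ n.
Proof.
move=> nm; rewrite -(subnKC nm).
apply: (le_trans (xs_cauchy _ _ _)).
have q1 : 0 < 1 - q by have := q_lt1; lra.
rewrite (_ : c^-1 * hnorm ip y * (q ^+ n - q ^+ (n + (m - n))) / (1 - q)
   = (c^-1 * hnorm ip y / (1 - q)) * (q ^+ n - q ^+ (n + (m - n)))); last by ring.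
apply: ler_wpM2l; first by rewrite !mulr_ge0 ?invr_ge0 ?hn_ge0 // ltW ?c_pos.
by rewrite gerDl oppr_le0 exprn_ge0 ?q_ge0.
Qed.

Lemma Pe_hn v : hnorm ip (Pe v) <= c * hnorm ip v.
Proof.
rewrite /Pe; apply: (le_trans (hnD _ _)).
rewrite hnZr ger0_norm; last exact: ltW.
rewrite /c mulrDl lerD2r; exact: bnd_hn hM v.
Qed.

Lemma Pe_surj y : exists l, Pe l = y.
Proof.
have q1 : 0 < 1 - q by have := q_lt1; lra.
set K := c^-1 * hnorm ip y / (1 - q).
have K0 : 0 <= K by rewrite /K !mulr_ge0 ?invr_ge0 ?hn_ge0 // ltW ?c_pos.
have cauchy : forall e : R, 0 < e -> exists N : nat, forall m n : nat,
    (N <= m)%N -> (N <= n)%N -> hnorm ip (xs y m - xs y n) < e.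
  move=> e e0.
  have d0 : 0 < e / (2 * (K + 1)) by rewrite divr_gt0 // mulr_gt0 //; lra.
  have [N hN] := geo_small q_ge0 q_lt1 d0.
  exists N => m n hm hn.
  have e1 : xs y m - xs y n = (xs y m - xs y N) + (xs y N - xs y n).
    by rewrite addrA subrK.
  rewrite e1; apply: (le_lt_trans (hnD _ _)).
  rewrite (hnB (xs y N)).
  have b1 := xs_cauchy2 y hm; have b2 := xs_cauchy2 y hn.
  have hq := hN N (leqnn N).
  have hKq : K * q ^+ N <= K * (e / (2 * (K + 1))) by apply: ler_wpM2l => //; exact: ltW.
  have hfrac : K * (e / (2 * (K + 1))) < e / 2.
    rewrite mulrA ltr_pdivrMr ?mulr_gt0 //; last by lra.
    rewrite (_ : e / 2 * (2 * (K + 1)) = K * e + e); [lra | field; rewrite ?pnatr_eq0 //].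
  rewrite -/K in b1 b2.
  lra.
have [l hl] := hcomp cauchy.
exists l.
apply/eqP; rewrite eq_sym -subr_eq0; apply/eqP; apply: hn_eq0.
apply: zero_of_small; first exact: hn_ge0.
move=> d d0.
have d1 : 0 < d / (2 * (hnorm ip y + 1)).
  by rewrite divr_gt0 // mulr_gt0 //; have := hn_ge0 y; lra.
have [N1 hN1] := geo_small q_ge0 q_lt1 d1.
have d2 : 0 < d / (2 * c) by rewrite divr_gt0 // mulr_gt0 ?c_pos.
have [N2 hN2] := hl _ d2.
set n := maxn N1 N2.
have e1 : y - Pe l = es y n + Pe (xs y n - l).
  by rewrite /es (TB Pe_lin) addrA subrK.
rewrite e1; apply: (le_trans (hnD _ _)).
have a1 : hnorm ip (es y n) <= d / 2.
  apply: (le_trans (es_hn y n)).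
  have := hN1 n (leq_maxl _ _) => hq.
  have hy := hn_ge0 y.
  have : q ^+ n * hnorm ip y <= d / (2 * (hnorm ip y + 1)) * hnorm ip y.
    by apply: ler_wpM2r => //; exact: ltW.
  move=> h; apply: (le_trans h).
  rewrite mulrAC ler_pdivrMr ?mulr_gt0 //; last by lra.
  rewrite (_ : d / 2 * (2 * (hnorm ip y + 1)) = d * hnorm ip y + d); [lra | field; rewrite ?pnatr_eq0 //].
have a2 : hnorm ip (Pe (xs y n - l)) <= d / 2.
  apply: (le_trans (Pe_hn _)).
  have := hN2 n (leq_maxr _ _) => h.
  have : c * hnorm ip (xs y n - l) <= c * (d / (2 * c)).
    by apply: ler_wpM2l; [exact: ltW c_pos | exact: ltW].
  move=> h2; apply: (le_trans h2).
  rewrite le_eqVlt; apply/orP; left; apply/eqP; field.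
  by rewrite gt_eqF ?c_pos.
lra.
Qed.

Definition Pinv y := projT1 (cid (Pe_surj y)).

Lemma PeK y : Pe (Pinv y) = y.
Proof. exact: projT2 (cid (Pe_surj y)). Qed.

Lemma Re_Pe z : cRe (ip (Pe z) z) = cRe (ip (P z) z) + eps * nn z.
Proof. by rewrite /Pe (fDl ip_herm) (fZl ip_herm) ReD nnE ReRM. Qed.

Lemma Pe_inj x y : Pe x = Pe y -> x = y.
Proof.
move=> h; apply/eqP; rewrite -subr_eq0; apply/eqP.
have h0 : Pe (x - y) = 0 by rewrite (TB Pe_lin) h subrr.
apply: nn_eq0.
have := Re_Pe (x - y); rewrite h0 (f0l ip_herm) /= => e.
have a := Re_Pxx_ge0 (x - y); have b := nn_ge0 (x - y).
have c0 : 0 <= eps * nn (x - y) by rewrite mulr_ge0 // ltW.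
have : eps * nn (x - y) = 0 by lra.
by move/eqP; rewrite mulf_eq0 gt_eqF //= => /eqP.
Qed.

Lemma PinvK x : Pinv (Pe x) = x.
Proof. by apply: Pe_inj; rewrite PeK. Qed.

Lemma Pinv_lin : islin Pinv.
Proof. by move=> a x y; apply: Pe_inj; rewrite Pe_lin !PeK. Qed.

Lemma Pe_sa x y : ip (Pe x) y = ip x (Pe y).
Proof. exact: pos_sa Pe_pos x y. Qed.

Lemma Pinv_sa u v : ip (Pinv u) v = ip u (Pinv v).
Proof.
transitivity (ip (Pinv u) (Pe (Pinv v))); first by rewrite PeK.
by rewrite -Pe_sa PeK.
Qed.

Lemma Pinv_pos u : 0 <= ip (Pinv u) u.
Proof.
rewrite -{2}(PeK u) -Pe_sa.
by case: Pe_pos => _; apply.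
Qed.

Lemma nn_le_Pe x : nn (P x) <= nn (Pe x).
Proof.
rewrite /Pe nnD nnZ sq_real (fZr ip_herm) ReJRM.
have := Re_Pxx_ge0 x; have := nn_ge0 x.
have : 0 <= eps ^+ 2 * nn x by rewrite mulr_ge0 ?sqr_ge0 ?nn_ge0.
have : 0 <= eps * cRe (ip (P x) x) by rewrite mulr_ge0 ?Re_Pxx_ge0 // ltW.
lra.
Qed.

End Inv.

Section Main.
Variables (A Aadj P Q : V -> V) (MP MQ : R).
Hypotheses (hA : islin A) (hadj : forall x y, ip (A x) y = ip x (Aadj y))
  (hP : posop P) (hQ : posop Q) (hMP : bnd P MP) (hMQ : bnd Q MQ)
  (hPP : forall x, P (P x) = Aadj (A x)) (hQQ : forall x, Q (Q x) = A (Aadj x)).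

Lemma nnA w : nn (A w) = nn (P w).
Proof. by rewrite /nn (hadj w (A w)) -(hPP w) -(pos_sa hP w (P w)). Qed.

Lemma nnAadj w : nn (Aadj w) = nn (Q w).
Proof. by rewrite /nn -(hadj (Aadj w) w) -(hQQ w) (pos_sa hQ (Q w) w). Qed.

Section Eps.
Variable eps : R.
Hypothesis he : 0 < eps.

Let Pi := Pinv hP hMP he.
Let Qi := Pinv hQ hMQ he.

Lemma contr1 x : nn (Qi (A x)) <= nn x.
Proof.
set v := Qi (A x); set w := Qi v.
have e : ip v v = ip x (Aadj w) by rewrite {1}/v /Qi Pinv_sa (hadj x w).
apply: sq_le_div; [exact: nn_ge0 | exact: nn_ge0 |].
have h1 : nn v ^+ 2 <= nn x * nn (Aadj w).
  by rewrite /nn e; apply: le_trans (Re_le_sq _) (CSip _ _).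
apply: (le_trans h1); apply: ler_wpM2l; first exact: nn_ge0.
rewrite nnAadj.
have -> : v = Pe Q eps w by rewrite /w /Qi PeK.
exact: nn_le_Pe.
Qed.

Lemma contr2 y : nn (Pi (Aadj y)) <= nn y.
Proof.
set v := Pi (Aadj y); set w := Pi v.
have e : ip v v = (ip (A w) y)^* by rewrite {1}/v /Pi Pinv_sa (fC ip_herm w (Aadj y)) -(hadj w y).
apply: sq_le_div; [exact: nn_ge0 | exact: nn_ge0 |].
have h1 : nn v ^+ 2 <= nn (A w) * nn y.
  by rewrite /nn e ReJ; apply: le_trans (Re_le_sq _) (CSip _ _).
apply: (le_trans h1); rewrite mulrC; apply: ler_wpM2l; first exact: nn_ge0.
rewrite nnA.
have -> : v = Pe P eps w by rewrite /w /Pi PeK.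
exact: nn_le_Pe.
Qed.

Definition S x := Pi (Aadj (Qi (A x))).

Lemma contrS x : nn (S x) <= nn x.
Proof. exact: le_trans (contr2 _) (contr1 _). Qed.

Lemma contr_iter k x : nn (iter k S x) <= nn x.
Proof.
elim: k => [//|k IH]; rewrite iterS; exact: le_trans (contrS _) IH.
Qed.

Let F := fun x y => ip (Pe P eps x) y.
Lemma F_herm : herm F.
Proof. exact: pos_herm (Pe_pos hP he). Qed.

Lemma FS x : F (S x) = fun y => ip (Aadj (Qi (A x))) y.
Proof. by rewrite /F /S /Pi PeK. Qed.

Lemma S_sym x y : F (S x) y = F x (S y).
Proof.
rewrite /F (Pe_sa hP he x) /S /Pi !PeK -(hadj x (Qi (A y))) /Qi -(Pinv_sa hQ hMQ he).
rewrite (fC ip_herm y) -(hadj y) (fC ip_herm (A y)) //.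
Qed.

Lemma FSxx x : cRe (F (S x) x) = cRe (ip (Qi (A x)) (A x)).
Proof.
rewrite /F /S /Pi PeK (fC ip_herm x) ReJ -(hadj x) (fC ip_herm (A x)) ReJ //.
Qed.

Lemma reid_main x : cRe (ip (Qi (A x)) (A x)) <= cRe (ip (P x) x) + eps * nn x.
Proof.
rewrite -FSxx -Re_Pe.
apply: (@reid _ _ F F_herm S S_sym x ((MP + eps) * nn x)).
  rewrite FSxx; have := Pinv_pos hQ hMQ he (A x); rewrite lecE /= => /andP[_ ->] //.
move=> k; rewrite /F Re_Pe.
have h1 := Re_Pxx_le hMP (iter k S x).
have h2 := contr_iter k x.
have h3 : 0 <= MP by case: hMP.
rewrite mulrDl; apply: lerD.
  apply: le_trans h1 _; exact: ler_wpM2l.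
by apply: ler_wpM2l => //; exact: ltW.
Qed.

Lemma mixed_eps x y : sq (ip (A x) y) <=
  (cRe (ip (P x) x) + eps * nn x) * (cRe (ip (Q y) y) + eps * nn y).
Proof.
have e : A x = Pe Q eps (Qi (A x)) by rewrite /Qi PeK.
rewrite e.
apply: le_trans (CS (pos_herm (Pe_pos hQ he)) _ _) _.
rewrite /= (Re_Pe Q eps y); apply: ler_wpM2r.
  by rewrite addr_ge0 ?mulr_ge0 ?nn_ge0 ?Re_Pxx_ge0 // ltW.
rewrite -e (fC ip_herm) ReJ; exact: reid_main.
Qed.

End Eps.

Lemma mixed x y : sq (ip (A x) y) <= cRe (ip (P x) x) * cRe (ip (Q y) y).
Proof.
apply: (@eps_lim _ _ _ _ (nn x) (nn y)); [exact: Re_Pxx_ge0 | exact: Re_Pxx_ge0 | exact: nn_ge0 | exact: nn_ge0 |].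
move=> e he; exact: (mixed_eps he x y).
Qed.

Lemma normcE (z : R[i]) : Normc.normc z = Num.sqrt (sq z).
Proof. by case: z. Qed.

Lemma normc_ge0 (z : R[i]) : 0 <= Normc.normc z.
Proof. by rewrite normcE sqrtr_ge0. Qed.

Lemma normc_sqr (z : R[i]) : Normc.normc z ^+ 2 = sq z.
Proof. by rewrite normcE sqr_sqrtr ?sq_ge0. Qed.

Lemma normc_ip u v : Normc.normc (ip u v) <= hnorm ip u * hnorm ip v.
Proof.
by rewrite normcE /hnorm -sqrtrM ?nn_ge0 // ler_sqrt ?mulr_ge0 ?nn_ge0 // CSip.
Qed.

Lemma Re_le_normc (z : R[i]) : cRe z <= Normc.normc z.
Proof. by rewrite normcE le_sqrt_sq. Qed.

Lemma normcJ (z : R[i]) : Normc.normc z^* = Normc.normc z.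
Proof. by rewrite !normcE sqJ. Qed.

Lemma buzano a b e : nn e = 1 ->
  2 * Normc.normc (ip a e * ip e b) <= hnorm ip a * hnorm ip b + Normc.normc (ip a b).
Proof.
move=> he.
have hu : nn ((2%:R * ip b e) *: e - b) = nn b.
  rewrite nnD nnZ nnN (fNr ip_herm) (fZl ip_herm) he mulr1 (fC ip_herm b e).
  move: (nn b) (ip b e) => nb [p q].
  rewrite /sq; simpc; rewrite /=. ring.
set u := (2%:R * ip b e) *: e - b.
have eu : ip a u = 2%:R * (ip a e * ip e b) - ip a b.
  rewrite /u (fBr ip_herm) (fZr ip_herm) rmorphM /= (fC ip_herm e b).
  congr (_ - _).
  rewrite rmorph_nat.
  transitivity (2 * ip e b * ip a e); last by ring.
  by congr (_ * _ * _); exact: conjcK.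
have h1 : Normc.normc (ip a u) <= hnorm ip a * hnorm ip b.
  by apply: (le_trans (normc_ip _ _)); rewrite /hnorm -/(nn u) hu.
have h2 : Normc.normc (2%:R * (ip a e * ip e b)) <= Normc.normc (ip a u) + Normc.normc (ip a b).
  rewrite (_ : 2%:R * (ip a e * ip e b) = ip a u + ip a b); last by rewrite eu subrK.
  exact: le_normcD.
have h3 : Normc.normc (2%:R * (ip a e * ip e b)) = 2 * Normc.normc (ip a e * ip e b).
  rewrite Normc.normcM; congr (_ * _).
  by have := normcMn (1 : Rcomplex R) 2; rewrite Normc.normc1.
rewrite -h3; lra.
Qed.

Lemma main_pt x : nn x = 1 ->
  Normc.normc (ip (A x) x) ^+ 2 <= sq (ip (P x + 'i *: Q x) x) / 4
    + hnorm ip (P (P x) + Q (Q x)) / 8 + Normc.normc (ip (P (Q x)) x) / 4.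
Proof.
move=> hx.
have hnx : hnorm ip x = 1 by rewrite /hnorm -/(nn x) hx sqrtr1.
set a := cRe (ip (P x) x); set b := cRe (ip (Q x) x).
have ha : 0 <= a by exact: Re_Pxx_ge0.
have hb : 0 <= b by exact: Re_Pxx_ge0.
have Pr : ip (P x) x = a%:C by case: (ge0_real (proj2 hP x)).
have Qr : ip (Q x) x = b%:C by case: (ge0_real (proj2 hQ x)).
have h1 : Normc.normc (ip (A x) x) ^+ 2 <= a * b by rewrite normc_sqr; exact: mixed.
have h2 : sq (ip (P x + 'i *: Q x) x) = a ^+ 2 + b ^+ 2.
  rewrite (fDl ip_herm) (fZl ip_herm) Pr Qr /sq; simpc; rewrite /=; ring.
have h3 : 2 * (a * b) <= hnorm ip (P x) * hnorm ip (Q x) + Normc.normc (ip (P x) (Q x)).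
  have := buzano (P x) (Q x) hx.
  rewrite (fC ip_herm (Q x) x) Pr Qr conjc_real -rmorphM normcE sq_real sqrtr_sqr.
  by rewrite ger0_norm ?mulr_ge0.
have h4 : hnorm ip (P x) * hnorm ip (Q x) <= (nn (P x) + nn (Q x)) / 2.
  rewrite -!hn_sqr.
  have := sqr_ge0 (hnorm ip (P x) - hnorm ip (Q x)); rewrite sqrrB; lra.
have h5 : nn (P x) + nn (Q x) <= hnorm ip (P (P x) + Q (Q x)).
  have -> : nn (P x) + nn (Q x) = cRe (ip (P (P x) + Q (Q x)) x).
    by rewrite (fDl ip_herm) ReD /nn (pos_sa hP (P x) x) (pos_sa hQ (Q x) x).
  apply: le_trans (Re_le_normc _) _.
  by apply: le_trans (normc_ip _ _) _; rewrite hnx mulr1.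
have h6 : Normc.normc (ip (P x) (Q x)) = Normc.normc (ip (P (Q x)) x).
  by rewrite (pos_sa hP x (Q x)) (fC ip_herm (P (Q x)) x) normcJ.
rewrite h2 -h6.
have : 0 <= (a - b) ^+ 2 := sqr_ge0 _.
rewrite sqrrB.
lra.
Qed.

End Main.
Lemma numrad_elem T K x : (forall y, hnorm ip (T y) <= K * hnorm ip y) ->
  hnorm ip x = 1 -> Normc.normc (ip (T x) x) <= numrad ip T.
Proof.
move=> hK hx; apply: ub_le_sup; last by exists x.
exists K => r [y [hy ->]].
apply: le_trans (normc_ip _ _) _; rewrite hy mulr1.
by apply: le_trans (hK y) _; rewrite hy mulr1.
Qed.

Lemma numrad_empty T : ~ (exists x, hnorm ip x = 1) -> numrad ip T = 0.
Proof.
move=> h; rewrite /numrad.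
have -> : ([set r : R | exists x : V, hnorm ip x = 1 /\ r = Normc.normc (ip (T x) x)] = set0)%classic.
  by apply/seteqP; split => r // [x [hx _]]; apply: h; exists x.
exact: sup0.
Qed.

Lemma opnorm_elem T K x : 0 <= K -> (forall y, hnorm ip (T y) <= K * hnorm ip y) ->
  hnorm ip x <= 1 -> hnorm ip (T x) <= opnorm ip T.
Proof.
move=> K0 hK hx; apply: ub_le_sup; last by exists x.
exists K => r [y [hy ->]].
apply: le_trans (hK y) _.
by rewrite -[X in _ <= X]mulr1 ler_wpM2l.
Qed.

Lemma opnorm_ge0 T K : 0 <= K -> (forall y, hnorm ip (T y) <= K * hnorm ip y) ->
  0 <= opnorm ip T.
Proof.
move=> K0 hK; apply: le_trans (opnorm_elem K0 hK (x := 0) _); first exact: hn_ge0.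
by rewrite hn0.
Qed.

Lemma hn_i v : hnorm ip ('i *: v) = hnorm ip v.
Proof.
rewrite /hnorm -/(nn _) -/(nn v) nnZ (_ : sq 'i = 1) ?mul1r //.
by rewrite /sq /= expr0n /= add0r expr1n.
Qed.

End Hil.

Unset Implicit Arguments.

Theorem mainTheorem1 (R : realType) (V : lmodType R[i]) (ip : V -> V -> R[i])
  (A Aadj P Q : V -> V) :
  is_hilbert ip ->
  is_bounded_op ip A ->
  is_adjoint ip A Aadj ->
  is_pos_sqrt ip P (fun x => Aadj (A x)) ->
  is_pos_sqrt ip Q (fun x => A (Aadj x)) ->
  numrad ip A ^+ 2 <=
    numrad ip (fun x => P x + 'i *: Q x) ^+ 2 / 4%:R
    + opnorm ip (fun x => P (P x) + Q (Q x)) / 8%:R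
    + numrad ip (fun x => P (Q x)) / 4%:R.
Proof.
move=> [hip hcomp] hAb hadj [[hPb hPpos] hPP] [[hQb hQpos] hQQ].
have [hAl [MA hMA]] := bounded_bnd hip hAb.
have [hPl [MP hMP]] := bounded_bnd hip hPb.
have [hQl [MQ hMQ]] := bounded_bnd hip hQb.
have hP : posop ip P by [].
have hQ : posop ip Q by [].
have MP0 : 0 <= MP by case: hMP.
have MQ0 : 0 <= MQ by case: hMQ.
have bP := bnd_hn hip hMP; have bQ := bnd_hn hip hMQ.
have b1 : forall y, hnorm ip (P y + 'i *: Q y) <= (MP + MQ) * hnorm ip y.
  move=> y; apply: le_trans (hnD hip _ _) _; rewrite hn_i // mulrDl.
  exact: lerD.
have b2 : forall y, hnorm ip (P (P y) + Q (Q y)) <= (MP * MP + MQ * MQ) * hnorm ip y.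
  move=> y; apply: le_trans (hnD hip _ _) _; rewrite mulrDl -!mulrA.
  apply: lerD.
    by apply: le_trans (bP _) _; apply: ler_wpM2l.
  by apply: le_trans (bQ _) _; apply: ler_wpM2l.
have b3 : forall y, hnorm ip (P (Q y)) <= (MP * MQ) * hnorm ip y.
  move=> y; rewrite -mulrA; apply: le_trans (bP _) _; exact: ler_wpM2l.
have K2 : 0 <= MP * MP + MQ * MQ by rewrite addr_ge0 ?mulr_ge0.
have o0 := opnorm_ge0 hip K2 b2.
set w1 := numrad ip (fun x => P x + 'i *: Q x).
set o := opnorm ip (fun x => P (P x) + Q (Q x)).
set w3 := numrad ip (fun x => P (Q x)).
have [[x0 hx0]|nox] := pselect (exists x, hnorm ip x = 1); last first.
  rewrite /w1 /w3 !numrad_empty //.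
  rewrite expr0n /= mul0r !add0r addr0; apply: divr_ge0 => //; exact: ler0n.
have w1ge : forall x, hnorm ip x = 1 -> Normc.normc (ip (P x + 'i *: Q x) x) <= w1.
  by move=> x hx; apply: (numrad_elem hip b1 hx).
have w3ge : forall x, hnorm ip x = 1 -> Normc.normc (ip (P (Q x)) x) <= w3.
  by move=> x hx; apply: (numrad_elem hip b3 hx).
have oge : forall x, hnorm ip x = 1 -> hnorm ip (P (P x) + Q (Q x)) <= o.
  move=> x hx; apply: (opnorm_elem K2 b2 (x := x)); rewrite hx.
  by [].
set RHS := w1 ^+ 2 / 4%:R + o / 8%:R + w3 / 4%:R.
have pt : forall x, hnorm ip x = 1 -> Normc.normc (ip (A x) x) ^+ 2 <= RHS.
  move=> x hx.
  have nx : nn ip x = 1 by rewrite -hn_sqr // hx expr1n.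
  apply: le_trans (main_pt hip hcomp hadj hP hQ hMP hMQ hPP hQQ nx) _.
  rewrite /RHS -normc_sqr.
  have c1 : Normc.normc (ip (P x + 'i *: Q x) x) ^+ 2 <= w1 ^+ 2.
    by rewrite ler_sqr ?nnegrE ?normc_ge0 ?w1ge //; apply: le_trans (w1ge x hx); exact: normc_ge0.
  have c2 := oge x hx.
  have c3 := w3ge x hx.
  lra.
have RHS0 : 0 <= RHS.
  apply: le_trans (pt x0 hx0); exact: sqr_ge0.
have hsup : numrad ip A <= Num.sqrt RHS.
  apply: ge_sup; first by exists (Normc.normc (ip (A x0) x0)), x0.
  move=> r [x [hx ->]].
  rewrite -(ger0_norm (normc_ge0 (ip (A x) x))) -sqrtr_sqr ler_sqrt //.
  exact: pt.
have n0 : 0 <= numrad ip A.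
  apply: le_trans (normc_ge0 (ip (A x0) x0)) _.
  exact: (numrad_elem hip (bnd_hn hip hMA) hx0).
rewrite -/RHS -(sqr_sqrtr RHS0) ler_sqr ?nnegrE ?sqrtr_ge0 //.
Qed.
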